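(* Let $W=\sum_{j\in[n]}p_j\mathrm B(\varepsilon_j)\in\mathbb B_n^*$ and $Q=\sum_{i\in[m]}q_i\mathrm B(\sigma_i)\in\mathbb B_m^*$, with all $p_j,q_i>0$, $\sum_jp_j=\sum_iq_i=1$, $0\le\varepsilon_1<\cdots<\varepsilon_n\le1/2$ and $0\le\sigma_1<\cdots<\sigma_m\le1/2$. If $W\preccurlyeq Q$, then $\varepsilon_1\ge\sigma_1$. If moreover $W$ is a $2n$-P-degradation of $Q$, then $\varepsilon_n\le\sigma_m$.
   Context: A BIDMC $W$ has input uniform on $\{0,1\}$, discrete output alphabet $\mathcal Y$ and transition probabilities $\Pr(y\mid x)$; its LR-profile is $P_W(\varepsilon)=\Pr\big(\mathcal L_W(y)=\varepsilon/(1-\varepsilon)\big)$ with $\mathcal L_W(\hat y)=\Pr(y=\hat y\mid x=0)/\Pr(y=\hat y\mid x=1)$, and $W\cong W'$ if LR-profiles coincide. $W'\preccurlyeq W$ if there is a channel $T$ from the output alphabet of $W$ to that of $W'$ with $\Pr(y'\mid x'=a)=\sum_{y}\Pr(y\mid x=a)T(y'\mid y)$. $\mathrm B(\varepsilon)$ is the BSC with crossover probability $\varepsilon$; $\sum_iq_iW_i$ denotes the random switching channel (use $W_i$ with probability $q_i$ independently of the input and output the index $i$ along with the output). $\mathbb B_n$ is the set of BIDMCs equivalent to $\sum_{i\in[n]}p_i\mathrm B(\varepsilon_i)$ for a probability vector $(p_i)$ and $\varepsilon_i\in[0,1]$; $\mathbb B_n^*=\mathbb B_n\setminus\mathbb B_{n-1}$.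 $P_\epsilon(W)=\frac12\sum_{y}\min\{\Pr(y\mid x=0),\Pr(y\mid x=1)\}$. For a symmetric BIDMC $Q$ and $n\ge1$, $W$ is a $2n$-P-degradation of $Q$ if $W\in\mathbb B_n$, $W\preccurlyeq Q$ and $P_\epsilon(W)=\min\{P_\epsilon(W'):W'\in\mathbb B_n,\ W'\preccurlyeq Q\}$. *)

(* Defs.v *)
From HB Require Import structures.
From mathcomp Require Import all_boot all_order all_algebra.
Set Implicit Arguments.
Unset Strict Implicit.
Unset Printing Implicit Defensive.
Import Order.TTheory GRing.Theory Num.Theory.
Local Open Scope ring_scope.

Section Channels.
Variable R : realFieldType.

(* A channel with output alphabet Y: [W x y] = Pr(y | x), where the input
   0 is encoded by [false] and the input 1 by [true]. *)
Definition chan (Y : finType) := bool -> Y -> R.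

Definition is_channel (Y : finType) (W : chan Y) : Prop :=
  forall x : bool, (forall y, 0 <= W x y) /\ \sum_(y : Y) W x y = 1.

Definition prob_vec (n : nat) (p : 'I_n -> R) : Prop :=
  (forall i, 0 <= p i) /\ \sum_(i < n) p i = 1.

(* Likelihood ratio L_W(y) = Pr(y|x=0)/Pr(y|x=1); [None] stands for +oo. *)
Definition LR (Y : finType) (W : chan Y) (y : Y) : option R :=
  if W true y == 0 then None else Some (W false y / W true y).

Definition lr_target (e : R) : option R :=
  if e == 1 then None else Some (e / (1 - e)).

(* LR-profile: P_W(eps) = Pr(L_W(y) = eps/(1-eps)) under uniform input. *)
Definition LRprofile (Y : finType) (W : chan Y) (e : R) : R :=
  \sum_(y : Y | LR W y == lr_target e) (W false y + W true y) / 2%:R.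

Definition chan_equiv (Y Y' : finType) (W : chan Y) (W' : chan Y') : Prop :=
  forall e : R, LRprofile W e = LRprofile W' e.

Definition degraded (Y' Y : finType) (W' : chan Y') (W : chan Y) : Prop :=
  exists T : Y -> Y' -> R,
    [/\ (forall y y', 0 <= T y y'),
        (forall y, \sum_(y' : Y') T y y' = 1) &
        (forall (a : bool) (y' : Y'), W' a y' = \sum_(y : Y) W a y * T y y')].

Definition bsc (e : R) : chan bool :=
  fun x y => if x == y then 1 - e else e.

(* Random switching channel sum_i p_i B(eps_i): the output is the pair
   (i, output of B(eps_i)). *)
Definition bsc_mix (n : nat) (p e : 'I_n -> R) : chan ('I_n * bool)%type :=
  fun x iy => p iy.1 * bsc (e iy.1) x iy.2.

Definition inB (n : nat) (Y : finType) (W : chan Y) : Prop :=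
  is_channel W /\
  exists p e : 'I_n -> R,
    [/\ prob_vec p, (forall i, 0 <= e i <= 1) & chan_equiv W (bsc_mix p e)].

Definition inBstar (n : nat) (Y : finType) (W : chan Y) : Prop :=
  inB n W /\ ~ inB n.-1 W.

Definition Pe (Y : finType) (W : chan Y) : R :=
  2%:R^-1 * \sum_(y : Y) Num.min (W false y) (W true y).

Definition P_degradation (n : nat) (Y Z : finType) (W : chan Y) (Q : chan Z)
  : Prop :=
  [/\ (1 <= n)%N, inB n W, degraded W Q &
      forall (Y' : finType) (W' : chan Y'),
        inB n W' -> degraded W' Q -> Pe W <= Pe W'].

End Channels.

(* Main.v *)
Require Import Defs.
From HB Require Import structures.
From mathcomp Require Import all_boot all_order all_algebra.
From mathcomp Require Import ring lra.
Import Order.TTheory GRing.Theory Num.Theory.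
Local Open Scope ring_scope.

Lemma sumIb (R : realFieldType) k (f : 'I_k * bool -> R) :
  \sum_(y : 'I_k * bool) f y = \sum_(i < k) (f (i, false) + f (i, true)).
Proof.
transitivity (\sum_(i < k) \sum_(b : bool) f (i, b)).
  by rewrite pair_bigA; apply: eq_bigr => -[i b].
by apply: eq_bigr => i _; rewrite big_bool addrC.
Qed.

Lemma Pe_mix (R : realFieldType) k (p e : 'I_k -> R) :
  (forall j, 0 <= p j) -> (forall j, 0 <= e j <= 2%:R^-1) ->
  Pe (bsc_mix p e) = \sum_(j < k) p j * e j.
Proof.
move=> hp he; rewrite /Pe sumIb /bsc_mix /bsc /= mulr_sumr.
apply: eq_bigr => j _.
have [h0 h1] := andP (he j).
have hle : p j * e j <= p j * (1 - e j).
  apply: ler_wpM2l => //; lra.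
rewrite (min_r hle) (min_l hle); field.
by [].
Qed.

Lemma mono_bounds (R : realFieldType) k (f : 'I_k.+1 -> R) :
  (forall i j : 'I_k.+1, (i < j)%N -> f i < f j) ->
  forall i, f ord0 <= f i /\ f i <= f ord_max.
Proof.
move=> hinc i; split.
  case: (ltnP 0 i) => h; first by apply/ltW/hinc.
  have -> : i = ord0 by apply/val_inj; move: h; rewrite leqn0 => /eqP.
  by [].
case: (ltnP i k) => h; first by apply/ltW/hinc.
have -> : i = ord_max by apply/val_inj => /=; apply/eqP; rewrite eqn_leq h -ltnS ltn_ord.
by [].
Qed.

Theorem lemma4 (R : realFieldType) (n m : nat)
  (p eps : 'I_n.+1 -> R) (q sig : 'I_m.+1 -> R)
  (hp : forall j, 0 < p j) (hp1 : \sum_(j < n.+1) p j = 1)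
  (hq : forall i, 0 < q i) (hq1 : \sum_(i < m.+1) q i = 1)
  (heps_inc : forall i j : 'I_n.+1, (i < j)%N -> eps i < eps j)
  (heps0 : 0 <= eps ord0) (heps1 : eps ord_max <= 2%:R^-1)
  (hsig_inc : forall i j : 'I_m.+1, (i < j)%N -> sig i < sig j)
  (hsig0 : 0 <= sig ord0) (hsig1 : sig ord_max <= 2%:R^-1)
  (hW : inBstar n.+1 (bsc_mix p eps))
  (hQ : inBstar m.+1 (bsc_mix q sig)) :
  degraded (bsc_mix p eps) (bsc_mix q sig) ->
  sig ord0 <= eps ord0 /\
  (P_degradation n.+1 (bsc_mix p eps) (bsc_mix q sig) ->
   eps ord_max <= sig ord_max).
Proof.
move=> [T [T0 T1 TW]].
have sigb := @mono_bounds _ _ _ hsig_inc.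
have epsb := @mono_bounds _ _ _ heps_inc.
have key1 : forall y, sig ord0 * (bsc_mix q sig false y + bsc_mix q sig true y)
                      <= bsc_mix q sig true y.
  move=> [i c]; rewrite /bsc_mix /bsc /=.
  have [h1 h2] := sigb i; have h3 := hq i.
  have -> : q i * (if false == c then 1 - sig i else sig i) +
            q i * (if true == c then 1 - sig i else sig i) = q i * 1.
    by case: c => /=; rewrite -mulrDr; congr (_ * _); ring.
  rewrite mulr1 mulrC; apply: ler_wpM2l; first exact: ltW.
  case: c => /=; lra.
split.
  have e1 : p ord0 * eps ord0 = \sum_y bsc_mix q sig true y * T y (ord0, false).
    by rewrite -TW /bsc_mix /bsc.
  have e0 : p ord0 * (1 - eps ord0) = \sum_y bsc_mix q sig false y * T y (ord0, false).
    by rewrite -TW /bsc_mix /bsc.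
  have : sig ord0 * p ord0 <= p ord0 * eps ord0.
    have -> : sig ord0 * p ord0 = \sum_y sig ord0 * (bsc_mix q sig false y
          + bsc_mix q sig true y) * T y (ord0, false).
      have -> : \sum_y sig ord0 * (bsc_mix q sig false y + bsc_mix q sig true y)
                 * T y (ord0, false) = sig ord0 * (\sum_y bsc_mix q sig false y * T y (ord0, false)
                 + \sum_y bsc_mix q sig true y * T y (ord0, false)).
        rewrite -big_split mulr_sumr; apply: eq_bigr => y _ /=; rewrite /bsc_mix; ring.
      rewrite -e1 -e0; ring.
    rewrite e1; apply: ler_sum => y _; apply: ler_wpM2r; [exact: T0 | exact: key1].
  by rewrite mulrC ler_pM2l.
move=> [_ _ _ hopt].
rewrite leNgt; apply/negP => hlt.
set s := sig ord_max in hlt *.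
have hs : s < 2%:R^-1 by apply: lt_le_trans hlt heps1.
pose e' := fun j => if eps j <= s then eps j else s.
pose mm := fun j y => T y (j, false) + T y (j, true).
pose Mj := fun j i => (mm j (i, false) + mm j (i, true)) / 2%:R.
pose alpha := fun i => (1 - s - sig i) / (1 - 2%:R * sig i).
pose T' := fun (y : 'I_m.+1 * bool) (z : 'I_n.+1 * bool) =>
  if eps z.1 <= s then (T y z + T (y.1, ~~ y.2) (z.1, ~~ z.2)) / 2%:R
  else Mj z.1 y.1 * (if z.2 == y.2 then alpha y.1 else 1 - alpha y.1).
have hden : forall i, 0 < 1 - 2%:R * sig i.
  move=> i; have [_ h] := sigb i; rewrite -/s in h; lra.
have hal : forall i, 0 <= alpha i <= 1.
  move=> i; have [h0 h] := sigb i; rewrite -/s in h; apply/andP; split.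
    apply: divr_ge0; last exact: ltW (hden i). lra.
  rewrite ler_pdivrMr ?hden //; lra.
have hm1 : forall y, \sum_j mm j y = 1 by move=> y; rewrite -(T1 y) sumIb.
have hMp : forall j, \sum_i q i * Mj j i = p j.
  move=> j.
  have a0 : p j = \sum_y bsc_mix q sig false y * mm j y.
    rewrite /mm; under eq_bigr do rewrite mulrDr.
    rewrite big_split -!TW /bsc_mix /bsc /=; ring.
  have a1 : p j = \sum_y bsc_mix q sig true y * mm j y.
    rewrite /mm; under eq_bigr do rewrite mulrDr.
    rewrite big_split -!TW /bsc_mix /bsc /=; ring.
  have e2 : p j + p j = \sum_i q i * (mm j (i, false) + mm j (i, true)).
    rewrite {1}a0 a1 -big_split sumIb /=; apply: eq_bigr => i _.
    rewrite /bsc_mix /bsc /=; ring.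
  transitivity ((\sum_i q i * (mm j (i, false) + mm j (i, true))) / 2%:R).
    by rewrite mulr_suml; apply: eq_bigr => i _; rewrite /Mj mulrA.
  by rewrite -e2; field.
have he' : forall j, 0 <= e' j <= 2%:R^-1.
  move=> j; have [h0 h1] := epsb j; have [g0 g1] := sigb ord_max; rewrite -/s in g0 g1.
  rewrite /e'; case: ifP => _; apply/andP; split; lra.
have hinB : inB n.+1 (bsc_mix p e').
  split.
    move=> x; split.
      move=> [j b]; rewrite /bsc_mix /bsc; apply: mulr_ge0; first exact: ltW.
      have /andP[h0 h1] := he' j; case: ifP => _ /=; lra.
    rewrite sumIb -hp1; apply: eq_bigr => j _.
    by case: x; rewrite /bsc_mix /bsc /=; ring.
  exists p, e'; split.
  - by split; [move=> j; exact: ltW | exact: hp1].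
  - by move=> j; have /andP[h0 h1] := he' j; apply/andP; split; lra.
  - by move=> e.
have hdeg : degraded (bsc_mix p e') (bsc_mix q sig).
  exists T'; split.
  - move=> [i c] [j b]; rewrite /T' /=; case: ifP => _.
      by apply: divr_ge0; [apply: addr_ge0; apply: T0 | apply: ler0n].
    apply: mulr_ge0.
      by apply: divr_ge0; [apply: addr_ge0; apply: addr_ge0; apply: T0 | apply: ler0n].
    have /andP[h0 h1] := hal i; case: ifP => _; lra.
  - move=> [i c]; rewrite sumIb.
    transitivity (\sum_j Mj j i).
      apply: eq_bigr => j _; rewrite /T' /=; case: ifP => _.
        by case: c; rewrite /Mj /mm /=; field.
      by case: c => /=; ring.
    by rewrite /Mj -mulr_suml big_split /= !hm1; field.
  - move=> a [j b].
    have [hj|hj] := boolP (eps j <= s).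
      rewrite /T' /= hj.
      have hW2 : bsc_mix p eps (~~ a) (j, ~~ b) = bsc_mix p eps a (j, b).
        by case: a; case: b; rewrite /bsc_mix /bsc.
      have flip : \sum_y bsc_mix q sig a y * T (y.1, ~~ y.2) (j, ~~ b)
                = \sum_y bsc_mix q sig (~~ a) y * T y (j, ~~ b).
        clear hW2; rewrite !sumIb; apply: eq_bigr => i _ /=.
        by case: a; rewrite /bsc_mix /bsc /=; ring.
      transitivity ((\sum_y bsc_mix q sig a y * T y (j, b)
                    + \sum_y bsc_mix q sig a y * T (y.1, ~~ y.2) (j, ~~ b)) / 2%:R).
        by rewrite flip -!TW hW2 /bsc_mix /e' /= hj; field.
      rewrite -big_split mulr_suml; apply: eq_bigr => y _ /=; ring.
    rewrite /T' /= (negbTE hj).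
    rewrite sumIb.
    transitivity (\sum_i q i * Mj j i * bsc s a b).
      by rewrite -mulr_suml hMp /bsc_mix /e' /= (negbTE hj).
    apply: eq_bigr => i _; rewrite /bsc_mix /bsc /alpha /=.
    have hd := lt0r_neq0 (hden i).
    by case: a; case: b => /=; field.
have hPe := hopt _ _ hinB hdeg.
have hepsb : forall j, 0 <= eps j <= 2%:R^-1.
  by move=> j; have [h0 h1] := epsb j; apply/andP; split; lra.
rewrite !Pe_mix in hPe; try (by move=> j; exact: ltW); try exact: he'; try exact: hepsb.
move: hPe; rewrite (bigD1 ord_max) //= (bigD1 ord_max (P := xpredT)) //=.
have hem : e' ord_max = s by rewrite /e' ifF //; apply/negbTE; rewrite -ltNge.
rewrite hem.
have hrest : \sum_(i < n.+1 | i != ord_max) p i * e' i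
           <= \sum_(i < n.+1 | i != ord_max) p i * eps i.
  apply: ler_sum => j _; apply: ler_wpM2l; first exact: ltW.
  by rewrite /e'; case: ifP => // /negbT; rewrite -ltNge => /ltW.
have hlt2 : p ord_max * s < p ord_max * eps ord_max by rewrite ltr_pM2l.
move=> h; lra.
Qed.
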